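(* Let $N\in\mathbb N$ and let $X$ be a real Banach space of dimension $2^N+1$ with a dual skipped 1-unconditional basis $(f_k)_{k=1}^{2^N+1}$. Suppose $\mathrm{ubc}(f_1,f_{2^N+1})=\mu>1$. Then $\mathrm{ubc}(f_j)_{j=1}^{2^N+1}\ge1+2^N(\mu-1)$.
   Context: A basic sequence $(e_k)_{k=1}^N$ ($1\le N\le\infty$) is skipped $\lambda$-unconditional if whenever $0=m_0<m_1<\dots<m_n<\infty$ with $m_j-m_{j-1}\ge2$ for $1\le j\le n$, and $y_j\in[e_i]_{i=m_{j-1}+1}^{m_j-1}$ (spans taken only over indices $i\le N$), then $\|\sum_{j=1}^n\epsilon_jy_j\|\le\lambda\|\sum_{j=1}^ny_j\|$ for all signs $\epsilon_j=\pm1$. A basis $(f_k)_{k=1}^M$ of a finite-dimensional space $F$ is dual skipped $\lambda$-unconditional if its dual (biorthogonal) basis $(f_k^* )_{k=1}^M$ in $F^*$ is skipped $\lambda$-unconditional. For a finite linearly independent sequence $(f_j)_{j\in A}$, $\mathrm{ubc}(f_j)_{j\in A}$ is the least $K$ such that $\|\sum_{j\in A}\epsilon_ja_jf_j\|\le K\|\sum_{j\in A}a_jf_j\|$ for all scalars $a_j$ and signs $\epsilon_j=\pm1$. *)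

(* Defs.v *)
From Stdlib Require Import Reals.
Open Scope R_scope.

(* Model: an n-dimensional real normed space X with basis (f_k)_{k=1}^n is
   identified (isometrically) with coefficient vectors a : nat -> R (only the
   coordinates 1..n matter), with norm  nrm a := || sum_{k=1}^n a_k f_k ||.
   The basis vector f_k is the k-th unit coefficient vector. *)

Fixpoint sumR (n : nat) (F : nat -> R) : R :=
  match n with
  | O => 0
  | S m => sumR m F + F (S m)
  end.

Record is_norm (n : nat) (nrm : (nat -> R) -> R) : Prop := {
  nrm_ext : forall a b, (forall k, (1 <= k <= n)%nat -> a k = b k) -> nrm a = nrm b;
  nrm_nonneg : forall a, 0 <= nrm a;
  nrm_def : forall a, nrm a = 0 -> forall k, (1 <= k <= n)%nat -> a k = 0;
  nrm_hom : forall c a, nrm (fun k => c * a k) = Rabs c * nrm a;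
  nrm_tri : forall a b, nrm (fun k => a k + b k) <= nrm a + nrm b
}.

(* Functionals on X: phi = sum_k b_k fstar_k  acts by  phi(a) = sum_k b_k a_k.
   dual_le n nrm b c  <->  ||phi|| in X-dual <= c. *)
Definition dual_le (n : nat) (nrm : (nat -> R) -> R) (b : nat -> R) (c : R) : Prop :=
  forall a, Rabs (sumR n (fun k => b k * a k)) <= c * nrm a.

(* dualnorm psi <= lam * dualnorm phi  (the dual norm is the least such c). *)
Definition dual_norm_le (n : nat) (nrm : (nat -> R) -> R)
  (psi : nat -> R) (lam : R) (phi : nat -> R) : Prop :=
  forall c, dual_le n nrm phi c -> dual_le n nrm psi (lam * c).

(* The dual basis (fstar_k)_{k=1}^n is skipped lam-unconditional. Blocks
   y_1..y_nb, y_j in span{fstar_i : m_{j-1} < i < m_j, i <= n}. *)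
Definition dual_skipped_unc (n : nat) (nrm : (nat -> R) -> R) (lam : R) : Prop :=
  forall (nb : nat) (m : nat -> nat) (y : nat -> nat -> R) (eps : nat -> R),
    m O = O ->
    (forall j, (1 <= j <= nb)%nat -> (m (j - 1) + 2 <= m j)%nat) ->
    (forall j k, (1 <= j <= nb)%nat -> y j k <> 0 ->
        (m (j - 1) < k < m j)%nat /\ (k <= n)%nat) ->
    (forall j, eps j = 1 \/ eps j = -1) ->
    dual_norm_le n nrm
      (fun k => sumR nb (fun j => eps j * y j k)) lam
      (fun k => sumR nb (fun j => y j k)).

Definition ubc_bound (nrm : (nat -> R) -> R) (A : nat -> Prop) (K : R) : Prop :=
  forall (a eps : nat -> R),
    (forall j, eps j = 1 \/ eps j = -1) ->
    (forall k, ~ A k -> a k = 0) ->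
    nrm (fun k => eps k * a k) <= K * nrm a.

Definition is_ubc (nrm : (nat -> R) -> R) (A : nat -> Prop) (K : R) : Prop :=
  ubc_bound nrm A K /\ forall K', ubc_bound nrm A K' -> K <= K'.

(* Main.v *)
Require Import Defs.
From Stdlib Require Import Reals Lra Lia Psatz Arith FunctionalExtensionality Classical.
Open Scope R_scope.

Lemma sumR_ext n F G : (forall k, (1 <= k <= n)%nat -> F k = G k) -> sumR n F = sumR n G.
Proof.
  induction n; simpl; intros H; auto.
  rewrite IHn by (intros; apply H; lia). rewrite H by lia. auto.
Qed.

Lemma sumR_plus n F G : sumR n (fun k => F k + G k) = sumR n F + sumR n G.
Proof. induction n; simpl; [lra|]. rewrite IHn. lra. Qed.

Lemma sumR_scal n c F : sumR n (fun k => c * F k) = c * sumR n F.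
Proof. induction n; simpl; [lra|]. rewrite IHn. lra. Qed.

Lemma sumR_zero n F : (forall k, (1 <= k <= n)%nat -> F k = 0) -> sumR n F = 0.
Proof. induction n; simpl; intros H; auto. rewrite IHn by (intros; apply H; lia). rewrite H by lia. lra. Qed.

Lemma sumR_single n j0 (P : nat -> bool) G :
  (1 <= j0 <= n)%nat -> P j0 = true ->
  (forall j, (1 <= j <= n)%nat -> P j = true -> j = j0) ->
  sumR n (fun j => if P j then G j else 0) = G j0.
Proof.
  induction n; intros Hj HP Hu; [lia|]. simpl.
  destruct (Nat.eq_dec j0 (S n)) as [->|Hne].
  - rewrite HP. rewrite sumR_zero. lra.
    intros k Hk. destruct (P k) eqn:E; auto. specialize (Hu k ltac:(lia) E). lia.
  - rewrite IHn; [| lia | auto | intros; apply Hu; auto; lia].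
    destruct (P (S n)) eqn:E; [|lra]. specialize (Hu (S n) ltac:(lia) E). lia.
Qed.

Lemma nrm_zero n nrm : is_norm n nrm -> nrm (fun _ => 0) = 0.
Proof.
  intros H. pose proof (nrm_hom _ _ H 0 (fun _ => 0)) as E. cbn beta in E.
  rewrite Rabs_R0 in E.
  transitivity (nrm (fun _ : nat => 0 * 0)).
  - f_equal. apply functional_extensionality; intros; ring.
  - rewrite E. ring.
Qed.

Lemma nrm_opp n nrm a : is_norm n nrm -> nrm (fun k => - a k) = nrm a.
Proof.
  intros H. pose proof (nrm_hom _ _ H (-1) a) as E.
  replace (fun k => -1 * a k) with (fun k => - a k) in E by (apply functional_extensionality; intros; lra).
  rewrite E. unfold Rabs; destruct Rcase_abs; lra.
Qed.

Lemma nrm_vanish n nrm a : is_norm n nrm -> (forall k, (1 <= k <= n)%nat -> a k = 0) -> nrm a = 0.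
Proof.
  intros H Ha. rewrite (nrm_ext _ _ H a (fun _ => 0)) by auto. apply (nrm_zero n); auto.
Qed.

Definition lingraph (Phi : (nat -> R) -> R -> Prop) : Prop :=
  Phi (fun _ => 0) 0 /\
  (forall w1 l1 w2 l2, Phi w1 l1 -> Phi w2 l2 -> Phi (fun i => w1 i + w2 i) (l1 + l2)) /\
  (forall a w l, Phi w l -> Phi (fun i => a * w i) (a * l)).

Lemma hb_ext n nrm (Phi : (nat -> R) -> R -> Prop) (v : nat -> R) :
  is_norm n nrm -> lingraph Phi -> (forall w l, Phi w l -> l <= nrm w) ->
  exists c, forall w l s, Phi w l -> l + s * c <= nrm (fun i => w i + s * v i).
Proof.
  intros Hn [H0 [Hadd Hsc]] Hdom.
  set (E := fun y => exists w l, Phi w l /\ y = l - nrm (fun i => w i - v i)).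
  assert (Hkey : forall w l w' l', Phi w l -> Phi w' l' ->
            l - nrm (fun i => w i - v i) <= nrm (fun i => w' i + v i) - l').
  { intros w l w' l' H1 H2.
    pose proof (Hdom _ _ (Hadd _ _ _ _ H1 H2)) as D.
    pose proof (nrm_tri _ _ Hn (fun i => w i - v i) (fun i => w' i + v i)) as T. cbn beta in T.
    replace (fun k => w k - v k + (w' k + v k)) with (fun i => w i + w' i) in T
      by (apply functional_extensionality; intros; lra).
    lra. }
  assert (Hb : bound E).
  { exists (nrm (fun i => 0 + v i) - 0). intros y [w [l [Hw ->]]]. apply Hkey; auto. }
  assert (Hne : exists y, E y).
  { exists (0 - nrm (fun i => 0 - v i)). exists (fun _ => 0), 0. auto. }
  destruct (completeness E Hb Hne) as [c [Hub Hlub]].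
  assert (Hlo : forall w l, Phi w l -> l - nrm (fun i => w i - v i) <= c).
  { intros w l Hw. apply Hub. exists w, l; auto. }
  assert (Hhi : forall w l, Phi w l -> c <= nrm (fun i => w i + v i) - l).
  { intros w l Hw. apply Hlub. intros y [w' [l' [Hw' ->]]]. apply Hkey; auto. }
  exists c. intros w l s Hw.
  destruct (Rtotal_order s 0) as [Hs|[Hs|Hs]].
  - set (r := - s).
    pose proof (Hlo _ _ (Hsc (/ r) _ _ Hw)) as L.
    pose proof (nrm_hom _ _ Hn r (fun i => / r * w i - v i)) as E1. cbn beta in E1.
    replace (fun k => r * (/ r * w k - v k)) with (fun i => w i + s * v i) in E1
      by (apply functional_extensionality; intros; unfold r; field; lra).
    rewrite Rabs_right in E1 by (unfold r; lra). rewrite E1.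
    assert (r > 0) by (unfold r; lra).
    assert (l <= r * (c + nrm (fun i => / r * w i - v i))).
    { replace l with (r * (/ r * l)) by (field; lra). apply Rmult_le_compat_l; lra. }
    unfold r in *. nra.
  - subst s. replace (fun i => w i + 0 * v i) with w by (apply functional_extensionality; intros; lra).
    pose proof (Hdom _ _ Hw). lra.
  - pose proof (Hhi _ _ (Hsc (/ s) _ _ Hw)) as L.
    pose proof (nrm_hom _ _ Hn s (fun i => / s * w i + v i)) as E1. cbn beta in E1.
    replace (fun k => s * (/ s * w k + v k)) with (fun i => w i + s * v i) in E1
      by (apply functional_extensionality; intros; field; lra).
    rewrite Rabs_right in E1 by lra. rewrite E1.
    assert (l = s * (/ s * l)) by (field; lra).
    nra.
Qed.

Definition Ex (n : nat) (x : nat -> R) (i : nat) : R :=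
  if andb (Nat.leb 1 i) (Nat.leb i n) then x i else 0.
Definition ev (j : nat) (i : nat) : R := if Nat.eqb i j then 1 else 0.

Lemma hb_many nn nrm : is_norm nn nrm -> forall m (Phi : (nat -> R) -> R -> Prop),
  lingraph Phi -> (forall w l, Phi w l -> l <= nrm w) ->
  exists b, forall w l x, Phi w l ->
    l + sumR m (fun i => b i * x i) <= nrm (fun i => w i + Ex m x i).
Proof.
  intros Hn m. induction m; intros Phi HL Hdom.
  - exists (fun _ => 0). intros w l x Hw. simpl.
    replace (fun i => w i + Ex 0 x i) with w.
    + pose proof (Hdom _ _ Hw); lra.
    + apply functional_extensionality; intros i; unfold Ex.
      destruct (Nat.leb 1 i) eqn:E1, (Nat.leb i 0) eqn:E2; simpl; try lra.
      apply Nat.leb_le in E1; apply Nat.leb_le in E2; lia.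
  - destruct (hb_ext _ _ Phi (ev (S m)) Hn HL Hdom) as [c Hc].
    set (Phi' := fun w' l' => exists w l s, Phi w l /\
                   w' = (fun i => w i + s * ev (S m) i) /\ l' = l + s * c).
    destruct HL as [H0 [Hadd Hsc]].
    assert (HL' : lingraph Phi').
    { split; [|split].
      - exists (fun _ => 0), 0, 0. split; auto. split.
        + apply functional_extensionality; intros; lra.
        + lra.
      - intros w1 l1 w2 l2 [a1 [k1 [s1 [P1 [-> ->]]]]] [a2 [k2 [s2 [P2 [-> ->]]]]].
        exists (fun i => a1 i + a2 i), (k1 + k2), (s1 + s2). split; auto. split.
        + apply functional_extensionality; intros; lra.
        + lra.
      - intros a w l [a1 [k1 [s1 [P1 [-> ->]]]]].
        exists (fun i => a * a1 i), (a * k1), (a * s1). split; auto. split.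
        + apply functional_extensionality; intros; lra.
        + lra. }
    assert (Hdom' : forall w l, Phi' w l -> l <= nrm w).
    { intros w l [a1 [k1 [s1 [P1 [-> ->]]]]]. apply Hc; auto. }
    destruct (IHm Phi' HL' Hdom') as [b' Hb'].
    exists (fun i => if Nat.eqb i (S m) then c else b' i).
    intros w l x Hw. simpl.
    rewrite (sumR_ext m _ (fun i => b' i * x i)).
    2:{ intros k Hk. destruct (Nat.eqb k (S m)) eqn:E; auto. apply Nat.eqb_eq in E; lia. }
    rewrite Nat.eqb_refl.
    assert (HP : Phi' (fun i => w i + x (S m) * ev (S m) i) (l + x (S m) * c)).
    { exists w, l, (x (S m)). auto. }
    pose proof (Hb' _ _ x HP) as T. cbn beta in T.
    replace (fun i => w i + Ex (S m) x i)
      with (fun i => w i + x (S m) * ev (S m) i + Ex m x i).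
    + lra.
    + apply functional_extensionality; intros i; unfold Ex, ev.
      destruct (Nat.eqb i (S m)) eqn:E.
      * apply Nat.eqb_eq in E; subst i.
        replace (Nat.leb (S m) m) with false by (symmetry; apply Nat.leb_gt; lia).
        replace (Nat.leb (S m) (S m)) with true by (symmetry; apply Nat.leb_le; lia).
        simpl. lra.
      * apply Nat.eqb_neq in E.
        destruct (Nat.leb 1 i); simpl; [|lra].
        destruct (Nat.leb i m) eqn:E1, (Nat.leb i (S m)) eqn:E2; try lra.
        -- apply Nat.leb_le in E1; apply Nat.leb_gt in E2; lia.
        -- apply Nat.leb_gt in E1; apply Nat.leb_le in E2; lia.
Qed.

Lemma Ex_in n x k : (1 <= k <= n)%nat -> Ex n x k = x k.
Proof.
  intros H; unfold Ex. replace (Nat.leb 1 k) with true by (symmetry; apply Nat.leb_le; lia).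
  replace (Nat.leb k n) with true by (symmetry; apply Nat.leb_le; lia). reflexivity.
Qed.

Lemma sum_ev n b a i : (1 <= i <= n)%nat -> sumR n (fun k => b k * (a * ev i k)) = a * b i.
Proof.
  intros Hi. rewrite (sumR_ext n _ (fun k => if Nat.eqb k i then a * b k else 0)).
  - apply (sumR_single n i (fun k => Nat.eqb k i) (fun k => a * b k)); auto.
    + apply Nat.eqb_refl.
    + intros j _ E; apply Nat.eqb_eq; auto.
  - intros k _. unfold ev. destruct (Nat.eqb k i); ring.
Qed.

Lemma quot n nrm (Mset : nat -> Prop) (v : nat -> R) (R0 : R) :
  is_norm n nrm ->
  (forall i, Mset i -> (1 <= i <= n)%nat) -> 0 <= R0 ->
  (forall b, dual_le n nrm b 1 -> (forall i, Mset i -> b i = 0) ->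
     sumR n (fun i => b i * v i) <= R0) ->
  forall d, 0 < d -> exists c, (forall i, c i <> 0 -> Mset i) /\
     nrm (fun i => v i + c i) <= R0 + d.
Proof.
  intros Hn HM HR0 Hb d Hd.
  destruct (classic (exists c, (forall i, c i <> 0 -> Mset i) /\
     nrm (fun i => v i + c i) <= R0 + d)) as [|Hno]; auto.
  exfalso. set (r := R0 + d).
  assert (Hc : forall c, (forall i, c i <> 0 -> Mset i) -> r < nrm (fun i => v i + c i)).
  { intros c Hs. apply Rnot_le_lt. intros Hle. apply Hno. exists c; auto. }
  set (Phi := fun w l => exists t c, (forall i, c i <> 0 -> Mset i) /\
                w = (fun i => t * v i + c i) /\ l = t * r).
  assert (HL : lingraph Phi).
  { split; [|split].
    - exists 0, (fun _ => 0). split; [intros i H; lra|]. split.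
      + apply functional_extensionality; intros; ring.
      + ring.
    - intros w1 l1 w2 l2 [t1 [c1 [S1 [-> ->]]]] [t2 [c2 [S2 [-> ->]]]].
      exists (t1 + t2), (fun i => c1 i + c2 i). split; [|split].
      + intros i H. destruct (classic (c1 i = 0)) as [E|E]; [apply S2|apply S1; auto]. lra.
      + apply functional_extensionality; intros; ring.
      + ring.
    - intros a w l [t1 [c1 [S1 [-> ->]]]].
      exists (a * t1), (fun i => a * c1 i). split; [|split].
      + intros i H. apply S1. intros E. apply H. rewrite E. ring.
      + apply functional_extensionality; intros; ring.
      + ring. }
  assert (Hdom : forall w l, Phi w l -> l <= nrm w).
  { intros w l [t [c [S [-> ->]]]].
    destruct (Rle_lt_dec t 0) as [Ht|Ht].
    - pose proof (nrm_nonneg _ _ Hn (fun i => t * v i + c i)).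
      assert (0 <= r) by (unfold r; lra). nra.
    - pose proof (nrm_hom _ _ Hn t (fun i => v i + / t * c i)) as E. cbn beta in E.
      replace (fun k => t * (v k + / t * c k)) with (fun i => t * v i + c i) in E
        by (apply functional_extensionality; intros; field; lra).
      rewrite E, Rabs_right by lra.
      assert (r < nrm (fun i => v i + / t * c i)).
      { apply Hc. intros i H. apply S. intros E2. apply H. rewrite E2. ring. }
      nra. }
  destruct (hb_many _ _ Hn n Phi HL Hdom) as [b Hbb].
  assert (Hz : forall w l x, Phi w l -> (forall k, (1 <= k <= n)%nat -> w k + x k = 0) ->
                 l + sumR n (fun i => b i * x i) <= 0).
  { intros w l x Hw Hv. pose proof (Hbb w l x Hw) as T.
    rewrite (nrm_vanish n nrm) in T; auto.
    intros k Hk. rewrite Ex_in by auto. apply Hv; auto. }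
  assert (Hvan : forall i, Mset i -> b i = 0).
  { intros i Hi. pose proof (HM i Hi) as Hin.
    assert (Pa : forall a, Phi (fun k => 0 * v k + a * ev i k) (0 * r)).
    { intros a. exists 0, (fun k => a * ev i k). split; auto.
      intros k H. unfold ev in H. destruct (Nat.eqb k i) eqn:E.
      - apply Nat.eqb_eq in E; subst; auto.
      - exfalso; apply H; ring. }
    pose proof (Hz _ _ (fun k => (-1) * ev i k) (Pa 1)) as T1.
    pose proof (Hz _ _ (fun k => 1 * ev i k) (Pa (-1))) as T2.
    cbn beta in T1, T2.
    specialize (T1 ltac:(intros; ring)). specialize (T2 ltac:(intros; ring)).
    rewrite sum_ev in T1, T2 by auto. lra. }
  assert (Hdual : dual_le n nrm b 1).
  { intros a. assert (P0 : Phi (fun k => 0 * v k + 0) (0 * r)).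
    { exists 0, (fun _ => 0). split; auto. intros k H; exfalso; apply H; auto. }
    pose proof (Hbb _ _ a P0) as T1. pose proof (Hbb _ _ (fun k => - a k) P0) as T2.
    rewrite (nrm_ext _ _ Hn _ a) in T1 by (intros k Hk; rewrite Ex_in by auto; ring).
    rewrite (nrm_ext _ _ Hn _ (fun k => - a k)) in T2 by (intros k Hk; rewrite Ex_in by auto; ring).
    rewrite (nrm_opp n) in T2 by auto.
    replace (fun i => b i * - a i) with (fun i => (-1) * (b i * a i)) in T2
      by (apply functional_extensionality; intros; ring).
    rewrite sumR_scal in T2. apply Rabs_le. lra. }
  assert (P1 : Phi (fun k => 1 * v k + 0) (1 * r)).
  { exists 1, (fun _ => 0). split; auto. intros k H; exfalso; apply H; auto. }
  pose proof (Hz _ _ (fun k => (-1) * v k) P1) as T. cbn beta in T.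
  specialize (T ltac:(intros; ring)).
  replace (fun i => b i * (-1 * v i)) with (fun i => (-1) * (b i * v i)) in T
      by (apply functional_extensionality; intros; ring).
  rewrite sumR_scal in T.
  pose proof (Hb b Hdual Hvan). unfold r in T. lra.
Qed.

Lemma dual_le_ext n nrm b b' c : dual_le n nrm b c ->
  (forall i, (1 <= i <= n)%nat -> b i = b' i) -> dual_le n nrm b' c.
Proof.
  intros H E a. rewrite (sumR_ext n _ (fun k => b k * a k)). apply H.
  intros k Hk. rewrite E; auto.
Qed.

Definition mm (h j : nat) : nat :=
  match j with O => O | S j' => (1 + h + j' * (2 * h))%nat end.

Lemma mm_mono h a b : (a <= b)%nat -> (mm h a <= mm h b)%nat.
Proof.
  intros H. destruct a, b; simpl; try lia.
  assert (a * (2*h) <= b * (2*h))%nat by (apply Nat.mul_le_mono_r; lia). lia.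
Qed.

Definition blk (n h j i : nat) : bool :=
  andb (andb (Nat.ltb (mm h (j - 1)) i) (Nat.ltb i (mm h j))) (Nat.leb i n).

Lemma blk_true n h j i : blk n h j i = true <->
  (mm h (j - 1) < i /\ i < mm h j /\ i <= n)%nat.
Proof.
  unfold blk. rewrite !Bool.andb_true_iff, Nat.ltb_lt, Nat.ltb_lt, Nat.leb_le. tauto.
Qed.

Lemma blk_uniq n h i j j' : (1 <= j)%nat -> (1 <= j')%nat ->
  blk n h j i = true -> blk n h j' i = true -> j = j'.
Proof.
  intros H1 H2 B1 B2. apply blk_true in B1, B2.
  destruct (Nat.lt_trichotomy j j') as [L|[L|L]]; auto; exfalso.
  - pose proof (mm_mono h j (j' - 1) ltac:(lia)). lia.
  - pose proof (mm_mono h j' (j - 1) ltac:(lia)). lia.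
Qed.

Definition epsj (j : nat) : R :=
  match j with O => 1 | S j' => if Nat.even j' then 1 else -1 end.

Lemma blk_exists n h J i : (1 <= h)%nat -> n = (1 + 2 * h * J)%nat -> (1 <= i <= n)%nat ->
  ~ (exists j, i = 1 + h + j * (2 * h))%nat ->
  exists j0, (1 <= j0 <= S J)%nat /\ blk n h j0 i = true.
Proof.
  intros Hh Hn Hi Hns.
  set (x := (i - 1 + h)%nat).
  pose proof (Nat.div_mod_eq x (2 * h)) as Ed.
  pose proof (Nat.mod_upper_bound x (2 * h) ltac:(lia)) as Er.
  set (q := (x / (2 * h))%nat) in *. set (r := (x mod (2 * h))%nat) in *.
  assert (Hq : (q <= J)%nat).
  { unfold q. apply Nat.lt_succ_r. apply Nat.div_lt_upper_bound; [lia|]. unfold x.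
    rewrite Hn in Hi. nia. }
  exists (S q). split; [lia|]. apply blk_true. simpl. rewrite Nat.sub_0_r.
  split; [|split; [|lia]].
  - destruct q as [|q']; simpl; [lia|].
    assert (r <> 0)%nat.
    { intros Hr. apply Hns. exists q'. unfold x in Ed. rewrite Hr in Ed. nia. }
    unfold x in Ed. nia.
  - unfold x in Ed. nia.
Qed.

Lemma flip_dual n nrm h J b :
  is_norm n nrm -> dual_skipped_unc n nrm 1 ->
  (1 <= h)%nat -> n = (1 + 2 * h * J)%nat ->
  dual_le n nrm b 1 ->
  (forall i j, (1 <= i <= n)%nat -> i = (1 + h + j * (2 * h))%nat -> b i = 0) ->
  exists psi, dual_le n nrm psi 1 /\
    forall j, (1 + j * (2 * h) <= n)%nat ->
      psi (1 + j * (2 * h))%nat = (if Nat.even j then 1 else -1) * b (1 + j * (2 * h))%nat.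
Proof.
  intros Hn Hsk Hh HnJ Hb Hvan.
  set (y := fun j i => if blk n h j i then b i else 0).
  specialize (Hsk (S J) (mm h) y epsj eq_refl).
  assert (C2 : forall j, (1 <= j <= S J)%nat -> (mm h (j - 1) + 2 <= mm h j)%nat).
  { intros j Hj. destruct j as [|[|j]]; simpl; try lia. }
  assert (C3 : forall j k, (1 <= j <= S J)%nat -> y j k <> 0 ->
              (mm h (j - 1) < k < mm h j)%nat /\ (k <= n)%nat).
  { intros j k _ H. unfold y in H. destruct (blk n h j k) eqn:E; [|lra].
    apply blk_true in E. lia. }
  assert (C4 : forall j, epsj j = 1 \/ epsj j = -1).
  { intros [|j]; simpl; auto. destruct (Nat.even j); auto. }
  specialize (Hsk C2 C3 C4 1 ).
  exists (fun k => sumR (S J) (fun j => epsj j * y j k)). split.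
  - replace 1 with (1 * 1) by ring. apply Hsk.
    apply (dual_le_ext _ _ b); auto.
    intros i Hi. unfold y.
    destruct (classic (b i = 0)) as [Z|NZ].
    + rewrite sumR_zero; auto. intros j _. destruct (blk n h j i); auto.
    + assert (Hns : ~ (exists j, i = 1 + h + j * (2 * h))%nat).
      { intros [j Hj]. apply NZ. eapply Hvan; eauto. }
      destruct (blk_exists n h J i Hh HnJ Hi Hns) as [j0 [Hj0 Hb0]].
      symmetry. apply (sumR_single _ j0 (fun j => blk n h j i) (fun _ => b i)); auto.
      intros j Hj E. eapply blk_uniq; eauto; lia.
  - intros j Hj. unfold y.
    rewrite (sumR_ext _ _ (fun j0 => if blk n h j0 (1 + j * (2 * h))%nat
                                    then epsj j0 * b (1 + j * (2 * h))%nat else 0)).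
    2:{ intros k _. destruct (blk _ _ _ _); ring. }
    assert (Bj : blk n h (S j) (1 + j * (2 * h))%nat = true).
    { apply blk_true. simpl. rewrite Nat.sub_0_r. destruct j; simpl; nia. }
    rewrite (sumR_single _ (S j) _ (fun j0 => epsj j0 * b (1 + j * (2 * h))%nat)); auto.
    + split; [lia|]. destruct (Nat.le_gt_cases (S j) (S J)) as [|G]; auto.
      exfalso. assert (j * (2*h) >= (S J) * (2 * h))%nat by (apply Nat.mul_le_mono_r; lia). nia.
    + intros j' Hj' E. eapply blk_uniq; eauto; lia.
Qed.

Definition sg (k i : nat) : R := if Nat.even ((i - 1) / 2 ^ k) then 1 else -1.

Lemma sg_at k m : sg k (1 + m * 2 ^ k) = if Nat.even m then 1 else -1.
Proof.
  unfold sg. replace (1 + m * 2 ^ k - 1)%nat with (m * 2 ^ k)%nat by lia.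
  rewrite Nat.div_mul; auto. apply Nat.pow_nonzero; lia.
Qed.

Lemma eps_limit a b C : 0 <= C -> (forall d, 0 < d -> a <= C * (b + d)) -> a <= C * b.
Proof.
  intros HC H. destruct (Rle_lt_dec a (C * b)) as [|L]; auto. exfalso.
  destruct (Req_dec C 0) as [Z|NZ].
  - subst. specialize (H 1 ltac:(lra)). lra.
  - assert (C > 0) by lra. specialize (H ((a - C * b) / (2 * C)) ltac:(apply Rdiv_lt_0_compat; lra)).
    replace (C * (b + (a - C * b) / (2 * C))) with (C * b + (a - C * b) / 2) in H by (field; lra).
    lra.
Qed.

Lemma main_ind N nrm K :
  is_norm (2 ^ N + 1)%nat nrm -> dual_skipped_unc (2 ^ N + 1)%nat nrm 1 ->
  ubc_bound nrm (fun k => (1 <= k <= 2 ^ N + 1)%nat) K -> 1 <= K ->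
  forall k, (k <= N)%nat -> forall u,
    (forall i, u i <> 0 -> (1 <= i <= 2 ^ N + 1)%nat /\ exists j, i = (1 + j * 2 ^ k)%nat) ->
    nrm (fun i => sg k i * u i) <= (1 + (K - 1) / 2 ^ k) * nrm u.
Proof.
  intros Hn Hsk HK HK1. set (n := (2 ^ N + 1)%nat) in *.
  induction k as [|k IH]; intros Hk u Hu.
  - simpl. replace (1 + (K - 1) / 1) with K by field.
    apply HK.
    + intros j. unfold sg. destruct (Nat.even _); auto.
    + intros j Hj. destruct (Req_dec (u j) 0) as [|NZ]; auto. exfalso; apply Hj, Hu, NZ.
  - set (h := (2 ^ k)%nat).
    assert (Hh : (1 <= h)%nat) by (unfold h; pose proof (Nat.pow_nonzero 2 k); lia).
    set (J := (2 ^ (N - S k))%nat).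
    assert (HnJ : n = (1 + 2 * h * J)%nat).
    { unfold n, h, J. replace (2 * 2 ^ k)%nat with (2 ^ S k)%nat by reflexivity.
      rewrite <- Nat.pow_add_r. replace (S k + (N - S k))%nat with N by lia. lia. }
    assert (E2 : (2 ^ S k = 2 * h)%nat) by reflexivity.
    set (v := fun i => sg (S k) i * u i).
    assert (Hq : forall b, dual_le n nrm b 1 ->
        (forall i, ((1 <= i <= n)%nat /\ exists j, i = (1 + h + j * (2 * h))%nat) -> b i = 0) ->
        sumR n (fun i => b i * v i) <= nrm u).
    { intros b Hb Hv.
      destruct (flip_dual n nrm h J b Hn Hsk Hh HnJ Hb) as [psi [Hpsi Hpv]].
      { intros i j Hi Ei. apply Hv. split; eauto. }
      rewrite (sumR_ext n _ (fun i => psi i * u i)).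
      - pose proof (Hpsi u). pose proof (Rle_abs (sumR n (fun i => psi i * u i))). lra.
      - intros i Hi. unfold v. destruct (Req_dec (u i) 0) as [Z|NZ].
        + rewrite Z; ring.
        + destruct (Hu i NZ) as [_ [j ->]]. rewrite E2 in *. rewrite Hpv by lia.
          rewrite <- E2, sg_at. ring. }
    assert (Hcomb : forall d, 0 < d -> nrm v <= (1 + (K - 1) / 2 ^ S k) * (nrm u + d)).
    { intros d Hd.
      destruct (quot n nrm (fun i => (1 <= i <= n)%nat /\ exists j, i = (1 + h + j * (2 * h))%nat)
                  v (nrm u) Hn ltac:(intros i [Hi _]; exact Hi) (nrm_nonneg _ _ Hn u) Hq d Hd)
        as [c [Hcs Hcn]].
      set (u' := fun i => v i + c i) in *.
      assert (Hvs : forall i, v i <> 0 -> exists j, i = (1 + j * (2 * h))%nat /\ (1 <= i <= n)%nat).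
      { intros i Hi. assert (u i <> 0) by (intros Z; apply Hi; unfold v; rewrite Z; ring).
        destruct (Hu i H) as [Hr [j Hj]]. exists j. rewrite <- E2. auto. }
      assert (Hu' : forall i, u' i <> 0 -> (1 <= i <= n)%nat /\ exists j, i = (1 + j * 2 ^ k)%nat).
      { intros i Hi. unfold u' in Hi. destruct (Req_dec (c i) 0) as [Z|NZ].
        - assert (v i <> 0) by (intros Z2; apply Hi; rewrite Z, Z2; ring).
          destruct (Hvs i H) as [j [-> Hr]]. split; auto. exists (2 * j)%nat. fold h. lia.
        - destruct (Hcs i NZ) as [Hr [j ->]]. split; auto. exists (1 + 2 * j)%nat. fold h. lia. }
      pose proof (IH ltac:(lia) u' Hu') as T.
      assert (Ev : v = (fun i => / 2 * (u' i + sg k i * u' i))).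
      { apply functional_extensionality; intros i. unfold u'.
        destruct (Req_dec (c i) 0) as [Z|NZ].
        - rewrite Z. destruct (Req_dec (v i) 0) as [Z2|NZ2]; [rewrite Z2; ring|].
          destruct (Hvs i NZ2) as [j [Ei _]].
          replace i with (1 + (2 * j) * 2 ^ k)%nat by (fold h; lia).
          rewrite sg_at. rewrite Nat.even_mul. simpl. field.
        - destruct (Hcs i NZ) as [_ [j Ei]].
          assert (Ei' : i = (1 + (1 + 2 * j) * 2 ^ k)%nat) by (fold h; lia).
          assert (Zv : v i = 0).
          { destruct (Req_dec (v i) 0) as [|NZ2]; auto. exfalso.
            destruct (Hvs i NZ2) as [j' [Ej' _]].
            fold h in Ei'.
            assert (HH : ((2 * j') * h = (1 + 2 * j) * h)%nat) by lia.
            apply Nat.mul_cancel_r in HH; lia. }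
          rewrite Zv. rewrite Ei'. rewrite sg_at. rewrite <- Ei'.
          replace (Nat.even (1 + 2 * j)) with false.
          + ring.
          + rewrite Nat.even_add, Nat.even_mul. simpl. reflexivity. }
      rewrite Ev.
      pose proof (nrm_hom _ _ Hn (/ 2) (fun i => u' i + sg k i * u' i)) as H1. cbn beta in H1.
      rewrite H1, Rabs_right by lra.
      pose proof (nrm_tri _ _ Hn u' (fun i => sg k i * u' i)) as H2. cbn beta in H2.
      assert (Hpk : 0 < 2 ^ k) by (apply pow_lt; lra).
      assert (0 <= (K - 1) / 2 ^ k) by (unfold Rdiv; apply Rmult_le_pos; [lra | left; apply Rinv_0_lt_compat; lra]).
      assert (Hc : / 2 * (1 + (1 + (K - 1) / 2 ^ k)) = 1 + (K - 1) / 2 ^ S k)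
        by (simpl; field; lra).
      rewrite <- Hc.
      pose proof (nrm_nonneg _ _ Hn u').
      assert (nrm u' + nrm (fun i => sg k i * u' i) <= (1 + (1 + (K - 1) / 2 ^ k)) * (nrm u + d)).
      { apply Rle_trans with ((1 + (1 + (K - 1) / 2 ^ k)) * nrm u'); [nra|].
        apply Rmult_le_compat_l; lra. }
      nra. }
    apply eps_limit; auto.
    assert (0 < 2 ^ S k) by (apply pow_lt; lra).
    assert (0 <= (K - 1) / 2 ^ S k) by (unfold Rdiv; apply Rmult_le_pos; [lra | left; apply Rinv_0_lt_compat; lra]). lra.
Qed.

Lemma sg1 N : sg N 1 = 1.
Proof. pose proof (sg_at N 0) as H. simpl in H. rewrite <- H. f_equal. Qed.

Lemma sgn N : sg N (2 ^ N + 1) = -1.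
Proof. pose proof (sg_at N 1) as H. simpl in H. rewrite <- H. f_equal. lia. Qed.

Theorem lemma5p3 (N : nat) (nrm : (nat -> R) -> R) (mu : R) :
  is_norm (2 ^ N + 1)%nat nrm ->
  dual_skipped_unc (2 ^ N + 1)%nat nrm 1 ->
  is_ubc nrm (fun k => k = 1%nat \/ k = (2 ^ N + 1)%nat) mu ->
  1 < mu ->
  forall K, is_ubc nrm (fun k => (1 <= k <= 2 ^ N + 1)%nat) K ->
    1 + 2 ^ N * (mu - 1) <= K.
Proof.
  intros Hn Hsk [Hmu Hmul] Hmu1 K [HK HKl].
  assert (HN1 : (1 <= 2 ^ N)%nat) by (pose proof (Nat.pow_nonzero 2 N); lia).
  assert (HK1 : 1 <= K).
  { pose proof (HK (ev 1) (fun _ => 1) ltac:(intros; auto)) as T.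
    assert (Hs : forall k, ~ (1 <= k <= 2 ^ N + 1)%nat -> ev 1 k = 0).
    { intros k Hk. unfold ev. destruct (Nat.eqb k 1) eqn:E; auto.
      apply Nat.eqb_eq in E; lia. }
    specialize (T Hs). cbn beta in T.
    replace (fun k => 1 * ev 1 k) with (ev 1) in T by (apply functional_extensionality; intros; ring).
    assert (P : 0 < nrm (ev 1)).
    { destruct (nrm_nonneg _ _ Hn (ev 1)) as [|Z]; auto. exfalso.
      pose proof (nrm_def _ _ Hn (ev 1) (eq_sym Z) 1%nat ltac:(lia)) as W.
      unfold ev in W. simpl in W. lra. }
    nra. }
  assert (Hp : 0 < 2 ^ N) by (apply pow_lt; lra).
  set (mu' := 1 + (K - 1) / 2 ^ N).
  assert (Hmu' : 1 <= mu').
  { unfold mu'. assert (0 <= (K - 1) / 2 ^ N); [|lra].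
    unfold Rdiv; apply Rmult_le_pos; [lra | left; apply Rinv_0_lt_compat; lra]. }
  assert (Hb : ubc_bound nrm (fun k => k = 1%nat \/ k = (2 ^ N + 1)%nat) mu').
  { intros a eps Heps Ha.
    assert (Hpt : forall (g : nat -> R), g 1%nat = eps 1%nat -> g (2 ^ N + 1)%nat = eps (2 ^ N + 1)%nat ->
               (fun k => eps k * a k) = (fun k => g k * a k)).
    { intros g G1 Gn. apply functional_extensionality; intros k.
      destruct (classic (k = 1%nat \/ k = (2 ^ N + 1)%nat)) as [[->| ->]|NA].
      - rewrite G1; auto.
      - rewrite Gn; auto.
      - rewrite (Ha k NA). ring. }
    assert (Hsupp : forall i, a i <> 0 -> (1 <= i <= 2 ^ N + 1)%nat /\ exists j, i = (1 + j * 2 ^ N)%nat).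
    { intros i Hi. destruct (classic (i = 1%nat \/ i = (2 ^ N + 1)%nat)) as [[->| ->]|NA].
      - split; [lia|]. exists 0%nat. lia.
      - split; [lia|]. exists 1%nat. lia.
      - exfalso; apply Hi, Ha, NA. }
    pose proof (main_ind N nrm K Hn Hsk HK HK1 N (le_n N) a Hsupp) as T. fold mu' in T.
    pose proof (nrm_nonneg _ _ Hn a).
    destruct (Heps 1%nat) as [E1|E1]; destruct (Heps (2 ^ N + 1)%nat) as [E2|E2].
    - rewrite (Hpt (fun _ => 1)) by auto.
      replace (fun k => 1 * a k) with a by (apply functional_extensionality; intros; ring). nra.
    - rewrite (Hpt (sg N)); [exact T | rewrite sg1; lra | rewrite sgn; lra].
    - rewrite (Hpt (fun k => - sg N k)); [| rewrite sg1; lra | rewrite sgn; lra].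
      replace (fun k => - sg N k * a k) with (fun k => - (sg N k * a k))
        by (apply functional_extensionality; intros; ring).
      rewrite (nrm_opp (2 ^ N + 1)); auto.
    - rewrite (Hpt (fun _ => -1)) by auto.
      replace (fun k => -1 * a k) with (fun k => - a k) by (apply functional_extensionality; intros; ring).
      rewrite (nrm_opp (2 ^ N + 1)); auto. nra. }
  pose proof (Hmul mu' Hb) as L. unfold mu' in L.
  assert (mu - 1 <= (K - 1) / 2 ^ N) by lra.
  assert (2 ^ N * (mu - 1) <= 2 ^ N * ((K - 1) / 2 ^ N)) by (apply Rmult_le_compat_l; lra).
  replace (2 ^ N * ((K - 1) / 2 ^ N)) with (K - 1) in H0 by (field; lra).
  lra.
Qed.
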